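(* Let $\zeta_5=\exp(2\pi i/5)$, $K=\mathbb{Q}(\zeta_5)\subset\mathbb{C}$, $\mathcal{O}_K=\mathbb{Z}[\zeta_5]$, let $\sigma:K\to\mathbb{C}$ be the embedding with $\sigma(\zeta_5)=\zeta_5^2$, and let $\mathcal{S}=\{z\in\mathcal{O}_K : |\sigma(z)|\le 1\}$. If $z_1,z_2\in\mathcal{S}$ with $z_1\neq z_2$, then $|z_1-z_2|\ge\frac{\sqrt5-1}{2}$.
   Context: Elements of $K$ are regarded as complex numbers via the inclusion $K\subset\mathbb{C}$. *)

(* Defs.v *)
From mathcomp Require Import all_boot all_algebra.
From mathcomp Require Import all_classical all_reals all_analysis.
From mathcomp.real_closed Require Import complex.
Set Implicit Arguments. Unset Strict Implicit. Unset Printing Implicit Defensive.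
Import GRing.Theory Num.Theory.
Local Open Scope ring_scope.
Local Open Scope complex_scope.

Definition zeta5 (R : realType) : R[i] :=
  (cos (2 * pi / 5)) +i* (sin (2 * pi / 5)).

(* Elements of
   O_K = Z[zeta5] are exactly the values  evZ p zeta5,  p : {poly int};
   the embedding sigma (zeta5 |-> zeta5^2) sends evZ p zeta5 to
   evZ p (zeta5 ^+ 2). *)
Definition evZ (R : realType) (p : {poly int}) (x : R[i]) : R[i] :=
  (map_poly (fun a : int => a%:~R) p).[x].

(* Main.v *)
Require Import Defs.
From mathcomp Require Import all_boot all_algebra.
From mathcomp Require Import all_classical all_reals all_analysis.
From mathcomp.real_closed Require Import complex.
From mathcomp Require Import ring lra zify.
Import order.Order.TTheory GRing.Theory Num.Theory.
Local Open Scope ring_scope.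
Local Open Scope complex_scope.

Section Z.
Variable R : realType.
Let th : R := 2 * pi / 5.

Lemma zeta_pow n : zeta5 R ^+ n = (cos (n%:R * th)) +i* (sin (n%:R * th)).
Proof.
elim: n => [|n IH]; first by rewrite expr0 !mul0r cos0 sin0.
rewrite exprS IH /zeta5 -/th.
have -> : n.+1%:R * th = th + n%:R * th by rewrite -addn1 natrD; ring.
rewrite cosD sinD /=.
by congr Complex; ring.
Qed.

Lemma zeta5_5 : zeta5 R ^+ 5 = 1.
Proof.
rewrite zeta_pow.
have -> : 5%:R * th = pi *+ 2 by rewrite /th mulr2n; field.
by rewrite cos2pi sin2pi.
Qed.

Lemma th_bounds : 0 < th < pi / 2.
Proof. have := pi_gt0 R; rewrite /th => h; apply/andP; split; lra. Qed.

Lemma cth_gt0 : 0 < cos th.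
Proof. apply: cos_gt0_pihalf; have := th_bounds; have := pi_gt0 R; move=> h /andP[h1 h2]; apply/andP; split; lra. Qed.

Lemma sth_gt0 : 0 < sin th.
Proof. apply: sin_gt0_pi; have := th_bounds; have := pi_gt0 R; move=> h /andP[h1 h2]; apply/andP; split; lra. Qed.

Lemma zeta_conj : (zeta5 R)^* = zeta5 R ^+ 4.
Proof.
have hz : zeta5 R != 0.
  rewrite /zeta5 eq_complex /= negb_and; apply/orP; right; rewrite -/th; have := sth_gt0; rewrite -/th => h; apply/eqP => h0; lra.
apply: (mulfI hz).
rewrite -exprS zeta5_5 /zeta5 /= -/th.
have := cos2Dsin2 th.
rewrite /GRing.mul /= => h.
apply/eqP; rewrite eq_complex /=; apply/andP; split; apply/eqP.
  rewrite -h; simpl; ring.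
ring.
Qed.

Lemma zeta_sum : 1 + zeta5 R + zeta5 R ^+ 2 + zeta5 R ^+ 3 + zeta5 R ^+ 4 = 0.
Proof.
have h1 : zeta5 R - 1 != 0.
  rewrite subr_eq0 /zeta5 eq_complex /= negb_and; apply/orP; right.
  rewrite -/th; have := sth_gt0 => h; apply/eqP => h0; lra.
have : (zeta5 R - 1) * (1 + zeta5 R + zeta5 R ^+ 2 + zeta5 R ^+ 3 + zeta5 R ^+ 4) = 0.
  have -> : (zeta5 R - 1) * (1 + zeta5 R + zeta5 R ^+ 2 + zeta5 R ^+ 3 + zeta5 R ^+ 4)
    = zeta5 R ^+ 5 - 1 by ring.
  by rewrite zeta5_5 subrr.
by move/eqP; rewrite mulf_eq0 (negbTE h1) /= => /eqP.
Qed.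

Lemma zeta_t : zeta5 R + zeta5 R ^+ 4 = (2 * cos th)%:C.
Proof.
rewrite -zeta_conj /zeta5 -/th /=.
apply/eqP; rewrite eq_complex /=; apply/andP; split; apply/eqP; ring.
Qed.

Lemma tau_eq : 2 * cos th = (Num.sqrt 5 - 1) / 2.
Proof.
set c := cos th.
have hc : 0 < c by exact: cth_gt0.
have hq : (2 * c) ^+ 2 + 2 * c - 1 = 0.
  apply: (@complexI R).
  rewrite rmorphB rmorphD rmorphXn rmorph1 /= -zeta_t.
  have -> : (zeta5 R + zeta5 R ^+ 4) ^+ 2 + (zeta5 R + zeta5 R ^+ 4) - 1
     = (zeta5 R ^+ 5 - 1) * (zeta5 R ^+ 3 + 2%:R) + (1 + zeta5 R + zeta5 R ^+ 2 + zeta5 R ^+ 3 + zeta5 R ^+ 4) by ring.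
  by rewrite zeta5_5 zeta_sum subrr mul0r addr0.
have h5 : Num.sqrt 5 = 4 * c + 1.
  have -> : (5 : R) = (4 * c + 1) ^+ 2 - 4 * ((2 * c) ^+ 2 + 2 * c - 1) by ring.
  rewrite hq mulr0 subr0.
  by rewrite sqrtr_sqr ger0_norm //; lra.
rewrite h5; field=>//.
Qed.
End Z.
Lemma evZ_red (R : realType) (p : {poly int}) : exists a0 a1 a2 a3 a4 : int,
  forall x : R[i], x ^+ 5 = 1 ->
  evZ p x = a0%:~R + a1%:~R * x + a2%:~R * x ^+ 2 + a3%:~R * x ^+ 3 + a4%:~R * x ^+ 4.
Proof.
elim/poly_ind: p => [|q c [a0 [a1 [a2 [a3 [a4 IH]]]]]].
  exists 0, 0, 0, 0, 0 => x _; rewrite /evZ map_poly0 horner0; ring.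
exists (a4 + c), a0, a1, a2, a3 => x hx.
have -> : evZ (q * 'X + c%:P) x = evZ q x * x + c%:~R.
  by rewrite /evZ rmorphD rmorphM /= map_polyX map_polyC /= !hornerE.
rewrite IH // intrD.
have -> : (a0%:~R + a1%:~R * x + a2%:~R * x ^+ 2 + a3%:~R * x ^+ 3 + a4%:~R * x ^+ 4) * x + c%:~R
  = a4%:~R * x ^+ 5 + c%:~R + a0%:~R * x + a1%:~R * x ^+ 2 + a2%:~R * x ^+ 3 + a3%:~R * x ^+ 4 :> R[i] by ring.
rewrite hx; ring.
Qed.

Lemma cj_term (R : realType) (z : R[i]) (e : int) k :
  Num.conj z = z ^+ 4 -> Num.conj (e%:~R * z ^+ k) = e%:~R * z ^+ (4 * k).
Proof. by move=> hc; rewrite rmorphM rmorphXn rmorph_int /= hc -exprM. Qed.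

Lemma prod_id (R : realType) (z : R[i]) (e0 e1 e2 e3 e4 : int) :
  z ^+ 5 = 1 -> Num.conj z = z ^+ 4 ->
  let w := e0%:~R + e1%:~R * z + e2%:~R * z ^+ 2 + e3%:~R * z ^+ 3 + e4%:~R * z ^+ 4 in
  w * Num.conj w = (e0*e0 + e1*e1 + e2*e2 + e3*e3 + e4*e4)%:~R
          + (e0*e1 + e1*e2 + e2*e3 + e3*e4 + e4*e0)%:~R * (z + z ^+ 4)
          + (e0*e2 + e1*e3 + e2*e4 + e3*e0 + e4*e1)%:~R * (z ^+ 2 + z ^+ 3).
Proof.
move=> h5 hc w.
have hz : forall k, z ^+ (5 + k) = z ^+ k by move=> k; rewrite exprD h5 mul1r.
have -> : Num.conj w = e0%:~R + e4%:~R * z + e3%:~R * z ^+ 2 + e2%:~R * z ^+ 3 + e1%:~R * z ^+ 4.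
  rewrite /w !rmorphD /= !cj_term // rmorphM !rmorph_int /= hc.
  have e8 : z ^+ (4 * 2) = z ^+ 3 by rewrite (_ : (4 * 2 = 5 + 3)%N) // hz.
  have e12 : z ^+ (4 * 3) = z ^+ 2 by rewrite (_ : (4 * 3 = 5 + (5 + 2))%N) // !hz.
  have e16 : z ^+ (4 * 4) = z ^+ 1 by rewrite (_ : (4 * 4 = 5 + (5 + (5 + 1)))%N) // !hz.
  rewrite e8 e12 e16 expr1; ring.
rewrite /w.
set E := (X in _ = X).
have -> : (e0%:~R + e1%:~R * z + e2%:~R * z ^+ 2 + e3%:~R * z ^+ 3 + e4%:~R * z ^+ 4) *
  (e0%:~R + e4%:~R * z + e3%:~R * z ^+ 2 + e2%:~R * z ^+ 3 + e1%:~R * z ^+ 4)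
  = E + (z ^+ 5 - 1) * ((e1*e1+e2*e2+e3*e3+e4*e4)%:~R + (e2*e1+e3*e2+e4*e3)%:~R * z
       + (e3*e1+e4*e2)%:~R * z ^+ 2 + (e4*e1)%:~R * z ^+ 3).
  rewrite /E; ring.
by rewrite h5 subrr mul0r addr0.
Qed.
Lemma real_key (R : realType) (t N M : R) (P0 P1 P2 : int) :
  t ^+ 2 + t - 1 = 0 -> 0 < t ->
  N = P0%:~R + P1%:~R * t + P2%:~R * (-1 - t) ->
  M = P0%:~R + P1%:~R * (-1 - t) + P2%:~R * t ->
  0 < N -> 0 <= M -> M <= 4 -> t ^+ 2 <= N.
Proof.
move=> ht t0 hN hM N0 M0 M4.
have hN' : N = (P0 - P2)%:~R + (P1 - P2)%:~R * t by rewrite hN !intrB; ring.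
have hM' : M = (P0 - P2)%:~R - (P1 - P2)%:~R - (P1 - P2)%:~R * t by rewrite hM !intrB; ring.
move: hN' hM'; set A := (P0 - P2); set B := (P1 - P2) => hN' hM'.
have th : 1 / 2 < t by nra.
have t2 : t ^+ 2 = 1 - t by lra.
have : (B <= -2)%R \/ B = -1 \/ B = 0 \/ (1 <= B)%R by lia.
case=> [hB|[hB|[hB|hB]]].
- have hb : (B%:~R : R) <= (-2 : int)%:~R by rewrite ler_int.
  nra.
- rewrite hB in hN'.
  have hA : (0 < A)%R.
    rewrite -(ltr0z R); move: hN'; rewrite intrN /= => hN'; lra.
  have : ((1 : int)%:~R : R) <= A%:~R by rewrite ler_int.
  move: hN'; rewrite intrN /= => hN'; lra.
- rewrite hB in hN'.
  have hA : (0 < A)%R by rewrite -(ltr0z R); move: hN'; rewrite mul0r addr0 => <-.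
  have : ((1 : int)%:~R : R) <= A%:~R by rewrite ler_int.
  move: hN'; rewrite mul0r addr0 => hN'; lra.
- have hb : ((1:int)%:~R : R) <= B%:~R by rewrite ler_int.
  nra.
Qed.

Lemma prod_ex (R : realType) (e0 e1 e2 e3 e4 : int) : exists P0 P1 P2 : int,
  forall z : R[i], z ^+ 5 = 1 -> Num.conj z = z ^+ 4 ->
  let w := e0%:~R + e1%:~R * z + e2%:~R * z ^+ 2 + e3%:~R * z ^+ 3 + e4%:~R * z ^+ 4 in
  w * Num.conj w = P0%:~R + P1%:~R * (z + z ^+ 4) + P2%:~R * (z ^+ 2 + z ^+ 3).
Proof. by eexists; eexists; eexists => z h5 hc; apply: prod_id. Qed.

Lemma norm_real (R : realType) (x : R[i]) : exists n : R, 0 <= n /\ `|x| = n%:C.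
Proof. exists (Num.sqrt ((complex.Re x)^+2 + (complex.Im x)^+2)); split; first exact: sqrtr_ge0.
exact: normc_def. Qed.

Theorem mainTheorem3 (R : realType) (p1 p2 : {poly int}) :
  `|evZ p1 (zeta5 R ^+ 2)| <= 1 ->
  `|evZ p2 (zeta5 R ^+ 2)| <= 1 ->
  evZ p1 (zeta5 R) != evZ p2 (zeta5 R) ->
  ((Num.sqrt 5 - 1) / 2 : R)%:C <= `|evZ p1 (zeta5 R) - evZ p2 (zeta5 R)|.
Proof.
move=> h1 h2; rewrite -subr_eq0 => hne.
have hsig : `|evZ p1 (zeta5 R ^+ 2) - evZ p2 (zeta5 R ^+ 2)| <= 2.
  apply: le_trans (ler_normB _ _) _.
  have -> : (2 : R[i]) = 1 + 1 by rewrite -[2]/(1 *+ 2) mulr2n.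
  exact: lerD.
move: hsig hne.
set z := zeta5 R.
have z5 : z ^+ 5 = 1 := zeta5_5 R.
have zc : Num.conj z = z ^+ 4 := zeta_conj R.
have y5 : (z ^+ 2) ^+ 5 = 1 by rewrite -exprM mulnC exprM z5 expr1n.
have yc : Num.conj (z ^+ 2) = (z ^+ 2) ^+ 4 by rewrite rmorphXn /= zc -!exprM mulnC.
have [a0 [a1 [a2 [a3 [a4 Ha]]]]] := evZ_red R p1.
have [b0 [b1 [b2 [b3 [b4 Hb]]]]] := evZ_red R p2.
rewrite (Ha z z5) (Hb z z5) (Ha _ y5) (Hb _ y5).
set t : R := (Num.sqrt 5 - 1) / 2.
have ht : (2 * cos (2 * pi / 5)) = t := tau_eq R.
have zt : z + z ^+ 4 = t%:C by rewrite -ht; exact: zeta_t.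
have zt' : z ^+ 2 + z ^+ 3 = (-1 - t)%:C.
  have := zeta_sum R; rewrite -/z => hs.
  rewrite rmorphB rmorphN rmorph1 /= -zt; apply/eqP; rewrite -subr_eq0; apply/eqP; rewrite -hs; ring.
have tq : t ^+ 2 + t - 1 = 0.
  apply: (@complexI R); rewrite rmorphB rmorphD rmorphXn rmorph1 rmorph0 /= -zt.
  have := zeta_sum R; rewrite -/z => hs.
  have -> : (z + z ^+ 4) ^+ 2 + (z + z ^+ 4) - 1
     = (z ^+ 5 - 1) * (z ^+ 3 + 2%:R) + (1 + z + z ^+ 2 + z ^+ 3 + z ^+ 4) by ring.
  by rewrite z5 hs subrr mul0r addr0.
have t0 : 0 < t.
  rewrite -ht; have := cth_gt0 R; move=> h; lra.
clearbody t.
set e0 := a0 - b0; set e1 := a1 - b1; set e2 := a2 - b2; set e3 := a3 - b3; set e4 := a4 - b4.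
have Ew : forall x : R[i], (a0%:~R + a1%:~R * x + a2%:~R * x ^+ 2 + a3%:~R * x ^+ 3 + a4%:~R * x ^+ 4) -
   (b0%:~R + b1%:~R * x + b2%:~R * x ^+ 2 + b3%:~R * x ^+ 3 + b4%:~R * x ^+ 4) =
   e0%:~R + e1%:~R * x + e2%:~R * x ^+ 2 + e3%:~R * x ^+ 3 + e4%:~R * x ^+ 4.
  by move=> x; rewrite /e0 /e1 /e2 /e3 /e4 !intrB; ring.
rewrite !Ew => hsig hne.
clearbody e0 e1 e2 e3 e4.
have [P0 [P1 [P2 HP]]] := prod_ex R e0 e1 e2 e3 e4.
have Pw := HP z z5 zc.
have Pv := HP _ y5 yc.
move: Pw Pv hsig hne => /=.
set w := (e0%:~R + _ * z + _ + _ + _).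
set v := (e0%:~R + _ * (z ^+ 2) + _ + _ + _).
move=> Pw Pv hsig hne; clearbody w v.
have [n [n0 hn]] := norm_real R w.
have [m [m0 hm]] := norm_real R v.
have Nw : n ^+ 2 = P0%:~R + P1%:~R * t + P2%:~R * (-1 - t).
  apply: (@complexI R).
  rewrite rmorphXn /= -hn normCK Pw zt zt' !rmorphD !rmorphM /= !rmorphB !rmorph_int.
  by rewrite ?rmorphN ?rmorph1.
have Nv : m ^+ 2 = P0%:~R + P1%:~R * (-1 - t) + P2%:~R * t.
  apply: (@complexI R).
  rewrite rmorphXn /= -hm normCK Pv -!exprM /=.
  have -> : z ^+ (2 * 4) = z ^+ 3 by rewrite (_ : (2 * 4 = 5 + 3)%N) // exprD z5 mul1r.
  have -> : z ^+ (2 * 3) = z by rewrite (_ : (2 * 3 = 5 + 1)%N) // exprD z5 mul1r expr1.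
  have -> : z ^+ (2 * 2) = z ^+ 4 by [].
  rewrite zt' (addrC (z ^+ 4)) zt !rmorphD !rmorphM /= !rmorphB !rmorph_int.
  by rewrite ?rmorphN ?rmorph1.
have mle : m <= 2.
  move: hsig; rewrite hm -(rmorph_nat (real_complex R) 2) lecR //.
have nne : n != 0.
  by apply/eqP => n0'; move: hne; rewrite -normr_eq0 hn n0' eqxx.
have hkey := @real_key R _ _ _ _ _ _ tq t0 Nw Nv.
rewrite hn lecR.
have : t ^+ 2 <= n ^+ 2.
  apply: hkey; [| exact: sqr_ge0 | nra].
  rewrite lt_neqAle sqr_ge0 andbT eq_sym sqrf_eq0 //.
have tge : 0 <= t by lra.
move=> h; nra.
Qed.
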